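(* Let $S=\mathbb{K}[x_1,\dots,x_n]$ be a polynomial ring over a field $\mathbb{K}$. Let $\mathcal{C}=(V,E)$ be a clutter with $V\subseteq\{x_1,\dots,x_n\}$, and let $\mathcal{C}'=(V,E')$ be the clutter obtained from $\mathcal{C}$ by removing all edges that contain a free vertex. Let $\beta(\mathcal{C}')$ be the matching number of $\mathcal{C}'$. Then \[ \operatorname{sreg}(S/I(\mathcal{C}))\le |V|-|E|+|E'|-\beta(\mathcal{C}'). \]
   Context: A clutter $\mathcal{C}=(V,E)$ consists of a finite vertex set $V$ and a collection $E$ of subsets of $V$ (edges), no edge containing another; vertices are identified with variables and $I(\mathcal{C})=(\prod_{x\in e}x : e\in E)\subset S$ is the edge ideal. An edge $e$ contains a free vertex if some $x\in e$ belongs to no other edge of $\mathcal{C}$. A matching is a set of pairwise disjoint edges; the matching number is the maximum size of a matching. Stanley regularity: for a squarefree monomial ideal $I\subset S$, a squarefree Stanley decomposition of $S/I$ is a decomposition $S/I=\bigoplus_{i=1}^r u_i\mathbb{K}[Z_i]$ as $\mathbb{K}$-vector spaces, where $Z_i\subseteq\{x_1,\dots,x_n\}$, $u_i$ are (images of) squarefree monomials with $\operatorname{supp}(u_i)\subseteq Z_i$, and each $u_i\mathbb{K}[Z_i]$ is the $\mathbb{K}$-span of $u_iv$, $v$ a monomial of $\mathbb{K}[Z_i]$, free over $\mathbb{K}[Z_i]$. Its Stanley regularity is $\max_i\deg(u_i)$, and $\operatorname{sreg}(S/I)$ is the minimum of this over all such decompositions. *)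

(* Defs.v *)
From HB Require Import structures.
From mathcomp Require Import all_boot all_order all_algebra.
From mathcomp Require Import mpoly.
Set Implicit Arguments. Unset Strict Implicit. Unset Printing Implicit Defensive.
Import GRing.Theory.
Local Open Scope ring_scope.

(* Variables x_1..x_n are indexed by 'I_n; a vertex set / edge is a {set 'I_n}. *)

Definition is_clutter (n : nat) (V : {set 'I_n}) (E : {set {set 'I_n}}) : Prop :=
  (forall e, e \in E -> e \subset V) /\
  (forall e f, e \in E -> f \in E -> e \subset f -> e = f).

Definition free_vertex (n : nat) (E : {set {set 'I_n}}) (e : {set 'I_n}) (x : 'I_n) : bool :=
  (x \in e) && [forall f in E, (x \in f) ==> (f == e)].

Definition remove_free_edges (n : nat) (E : {set {set 'I_n}}) : {set {set 'I_n}} :=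
  [set e in E | ~~ [exists x, free_vertex E e x]].

Definition is_matching (n : nat) (E M : {set {set 'I_n}}) : bool :=
  (M \subset E) && [forall e in M, forall f in M, (e != f) ==> [disjoint e & f]].

Definition matching_number (n : nat) (E : {set {set 'I_n}}) : nat :=
  \max_(M : {set {set 'I_n}} | is_matching E M) #|M|.

Definition sqmono (n : nat) (K : fieldType) (u : {set 'I_n}) : {mpoly K[n]} :=
  \prod_(i in u) 'X_i.

Definition in_edge_ideal (n : nat) (K : fieldType) (E : {set {set 'I_n}})
    (q : {mpoly K[n]}) : Prop :=
  exists g : {set 'I_n} -> {mpoly K[n]}, q = \sum_(e in E) g e * sqmono K e.

Definition in_subring (n : nat) (K : fieldType) (Z : {set 'I_n}) (f : {mpoly K[n]}) : Prop :=
  forall m, m \in msupp f -> forall i : 'I_n, i \notin Z -> m i = 0%N.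

(* A squarefree Stanley decomposition of S/I(C) with r pieces u_j K[Z_j]:
   - supp(u_j) subset of Z_j;
   - freeness: f |-> image of u_j f in S/I is injective on K[Z_j];
   - spanning: S/I is the sum of the images of the u_j K[Z_j];
   - directness: the sum of these images in S/I is direct. *)
Definition sq_stanley_decomposition (n : nat) (K : fieldType) (E : {set {set 'I_n}})
    (r : nat) (u Z : 'I_r -> {set 'I_n}) : Prop :=
  (forall j, u j \subset Z j) /\
  (forall j (f : {mpoly K[n]}), in_subring (Z j) f ->
      in_edge_ideal E (sqmono K (u j) * f) -> f = 0) /\
  (forall p : {mpoly K[n]}, exists (q : {mpoly K[n]}) (f : 'I_r -> {mpoly K[n]}),
      in_edge_ideal E q /\ (forall j, in_subring (Z j) (f j)) /\
      p = q + \sum_j sqmono K (u j) * f j) /\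
  (forall f : 'I_r -> {mpoly K[n]}, (forall j, in_subring (Z j) (f j)) ->
      in_edge_ideal E (\sum_j sqmono K (u j) * f j) ->
      forall j, in_edge_ideal E (sqmono K (u j) * f j)).

(* sreg(S/I(C)) <= b  iff  some squarefree Stanley decomposition has
   Stanley regularity max_j deg(u_j) <= b (sreg being the minimum). *)
Definition sreg_le (n : nat) (K : fieldType) (E : {set {set 'I_n}}) (b : int) : Prop :=
  exists (r : nat) (u Z : 'I_r -> {set 'I_n}),
    sq_stanley_decomposition K E u Z /\ forall j, (#|u j|%:Z <= b)%R.

(* Main.v *)
Require Import Defs.
From HB Require Import structures.
From mathcomp Require Import all_boot all_order all_algebra.
From mathcomp Require Import mpoly zify.
Set Implicit Arguments. Unset Strict Implicit. Unset Printing Implicit Defensive.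
Import GRing.Theory.
Local Open Scope ring_scope.

Section Alg.
Variables (n : nat) (K : fieldType).
Implicit Types (E : {set {set 'I_n}}) (p q f : {mpoly K[n]}) (m : 'X_{1..n}).

Definition supp m : {set 'I_n} := [set i | m i != 0%N].

Lemma sqmonoE (u : {set 'I_n}) : sqmono K u = 'X_[mesym1 u].
Proof.
rewrite /sqmono mprodXE; congr 'X_[_].
apply/mnmP=> i; rewrite mnmE mnm_sumE big_mkcond /=.
rewrite (bigD1 i) //= mnmE eqxx /= big1 ?addn0 // => j ne_ji.
by case: (_ \in _); rewrite // mnmE (negbTE ne_ji).
Qed.

Lemma msupp_sqmonoM (u : {set 'I_n}) f a :
  a \in msupp (sqmono K u * f) -> exists2 m, m \in msupp f & a = (mesym1 u + m)%MM.
Proof.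
rewrite sqmonoE mulrC (perm_mem (msuppMX _ _)) => /mapP [m Hm ->].
by exists m.
Qed.

Lemma mcoeff_sqmonoM (u : {set 'I_n}) f m :
  (sqmono K u * f)@_(mesym1 u + m) = f@_m.
Proof. by rewrite sqmonoE mulrC mcoeffMX. Qed.

Lemma supp_add u m : supp (mesym1 u + m) = u :|: supp m.
Proof.
apply/setP=> i; rewrite !inE mnmDE /mesym1 mnmE.
by case: (i \in u); rewrite ?addn_eq0.
Qed.

Lemma ideal_supp E p m : in_edge_ideal E p -> m \in msupp p ->
  exists2 e, e \in E & e \subset supp m.
Proof.
move=> [g ->] Hm; case: (boolP [exists e in E, e \subset supp m]) => [/exists_inP //|/exists_inPn Hno].
exfalso; move: Hm; rewrite mcoeff_msupp raddf_sum /= big1 ?eqxx // => e He.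
apply/eqP; rewrite mcoeff_eq0; apply/negP.
rewrite mulrC => /msupp_sqmonoM [m' _ Em].
move: (Hno e He) => /negP; apply; apply/subsetP=> i Hi.
by rewrite Em supp_add inE Hi.
Qed.

Lemma ideal0 E : in_edge_ideal E (0 : {mpoly K[n]}).
Proof. by exists (fun _ => 0); rewrite big1 // => e _; rewrite mul0r. Qed.

Lemma idealD E p q : in_edge_ideal E p -> in_edge_ideal E q -> in_edge_ideal E (p + q).
Proof.
move=> [g ->] [h ->]; exists (fun e => g e + h e).
by rewrite -big_split /=; apply: eq_bigr => e _; rewrite mulrDl.
Qed.

Lemma mesym1_le (u : {set 'I_n}) m : u \subset supp m -> (mesym1 u <= m)%MM.
Proof.
move/subsetP=> H; apply/mnm_lepP=> i; rewrite /mesym1 mnmE.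
by case Hi: (i \in u) => //; move: (H i Hi); rewrite inE lt0n.
Qed.

Lemma ideal_mono E (c : K) m e : e \in E -> e \subset supp m ->
  in_edge_ideal E (c *: 'X_[m]).
Proof.
move=> He Hs; exists (fun e' => if e' == e then c *: 'X_[m - mesym1 e] else 0).
rewrite (bigD1 e) //= eqxx big1 ?addr0; last first.
  by move=> e' /andP[_ /negbTE ->]; rewrite mul0r.
by rewrite sqmonoE -scalerAl -mpolyXD submK // mesym1_le.
Qed.

Lemma in_subring_supp Z f m : in_subring Z f -> m \in msupp f -> supp m \subset Z.
Proof.
move=> H Hm; apply/subsetP=> i; rewrite inE; apply: contraR => Hi.
by rewrite (H m Hm i Hi).
Qed.

Lemma in_subring0 Z : in_subring Z (0 : {mpoly K[n]}).
Proof. by move=> m; rewrite msupp0. Qed.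

Lemma in_subringD Z f g : in_subring Z f -> in_subring Z g -> in_subring Z (f + g).
Proof.
move=> Hf Hg m /msuppD_le; rewrite mem_cat => /orP[] Hm; [exact: Hf | exact: Hg].
Qed.

Variables (E : {set {set 'I_n}}) (r : nat) (u Z : 'I_r -> {set 'I_n}).
Hypothesis H1 : forall j, u j \subset Z j.
Hypothesis H2 : forall j (F : {set 'I_n}) e, u j \subset F -> F \subset Z j -> e \in E -> ~~ (e \subset F).
Hypothesis H3 : forall F : {set 'I_n}, (forall e, e \in E -> ~~ (e \subset F)) ->
  exists j, (u j \subset F) && (F \subset Z j).
Hypothesis H4 : forall j k (F : {set 'I_n}), u j \subset F -> F \subset Z j ->
  u k \subset F -> F \subset Z k -> j = k.

Lemma term_supp j f a : in_subring (Z j) f -> a \in msupp (sqmono K (u j) * f) ->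
  (u j \subset supp a) && (supp a \subset Z j).
Proof.
move=> Hf /msupp_sqmonoM [m Hm ->]; rewrite supp_add subsetUl /= subUset H1.
exact: in_subring_supp Hf Hm.
Qed.

Lemma stanley_of_partition : sq_stanley_decomposition K E u Z.
Proof.
split; first exact: H1.
split.
  move=> j f Hf Hid; apply/eqP; rewrite -msupp_eq0; apply/eqP.
  case Ef: (msupp f) => [|m s] //; have Hm : m \in msupp f by rewrite Ef inE eqxx.
  have Ha : (mesym1 (u j) + m)%MM \in msupp (sqmono K (u j) * f).
    by rewrite mcoeff_msupp mcoeff_sqmonoM -mcoeff_msupp.
  have [e He Hes] := ideal_supp Hid Ha.
  have /andP[Hu HZ] := term_supp Hf Ha.
  by move: (H2 Hu HZ He); rewrite Hes.
split.
  elim/mpolyind.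
    exists 0, (fun _ => 0); split; first exact: ideal0.
    split; first by move=> j; exact: in_subring0.
    by rewrite big1 ?addr0 // => j _; rewrite mulr0.
  move=> c m p _ _ [q [f [Hq [Hf ->]]]].
  have [q' [f' [Hq' [Hf' Em]]]] : exists (q : {mpoly K[n]}) (f : 'I_r -> {mpoly K[n]}),
      in_edge_ideal E q /\ (forall j, in_subring (Z j) (f j)) /\
      c *: 'X_[m] = q + \sum_j sqmono K (u j) * f j.
    case: (boolP [exists e in E, e \subset supp m]).
      move=> /exists_inP [e He Hs]; exists (c *: 'X_[m]), (fun _ => 0).
      split; first exact: ideal_mono He Hs.
      split; first by move=> j; exact: in_subring0.
      by rewrite big1 ?addr0 // => j _; rewrite mulr0.
    move=> /exists_inPn Hno; have [j /andP[Hu HZ]] := H3 Hno.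
    exists 0, (fun k => if k == j then c *: 'X_[m - mesym1 (u j)] else 0).
    split; first exact: ideal0.
    split.
      move=> k; case: eqP => [->|_]; last exact: in_subring0.
      move=> a /msuppZ_le; rewrite msuppX inE => /eqP -> i Hi.
      rewrite mnmBE; have : i \notin supp m by apply: contra Hi; apply: (subsetP HZ).
      by rewrite inE negbK => /eqP ->.
    rewrite add0r (bigD1 j) //= eqxx big1 ?addr0; last first.
      by move=> k /negbTE ->; rewrite mulr0.
    by rewrite sqmonoE -scalerAr -mpolyXD addmC submK // mesym1_le.
  exists (q' + q), (fun j => f' j + f j); split; first exact: idealD.
  split; first by move=> j; apply: in_subringD.
  rewrite Em [X in _ = _ + X](eq_bigr (fun j => sqmono K (u j) * f' j + sqmono K (u j) * f j)).
    by rewrite big_split /= addrACA.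
  by move=> j _; rewrite mulrDr.
move=> f Hf Hid j.
suff -> : sqmono K (u j) * f j = 0 by exact: ideal0.
apply/eqP; rewrite -msupp_eq0; apply/eqP.
case Es: (msupp _) => [|a s] //; have Ha : a \in msupp (sqmono K (u j) * f j).
  by rewrite Es inE eqxx.
have Hsum : a \in msupp (\sum_k sqmono K (u k) * f k).
  rewrite mcoeff_msupp raddf_sum /= (bigD1 j) //= big1 ?addr0 -?mcoeff_msupp //.
  move=> k /negbTE Hkj; apply/eqP; rewrite mcoeff_eq0; apply/negP => Hk.
  have /andP[Hu HZ] := term_supp (Hf k) Hk.
  have /andP[Hu' HZ'] := term_supp (Hf j) Ha.
  by move: (H4 Hu HZ Hu' HZ'); move/eqP; rewrite Hkj.
have [e He Hes] := ideal_supp Hid Hsum.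
have /andP[Hu HZ] := term_supp (Hf j) Ha.
by move: (H2 Hu HZ He); rewrite Hes.
Qed.

End Alg.
Section Comb.
Variables (n : nat) (V : {set 'I_n}) (E : {set {set 'I_n}}).
Hypothesis EV : forall e, e \in E -> e \subset V.

Definition E' := remove_free_edges E.
Definition Efree := E :\: E'.
Definition ch (e : {set 'I_n}) := [pick x | free_vertex E e x].
Definition X := [set x | [exists e in Efree, ch e == Some x]].

Lemma free_uniq e x f : free_vertex E e x -> f \in E -> x \in f -> f = e.
Proof.
by case/andP=> _ /forall_inP H Hf Hx; apply/eqP; move: (H f Hf); rewrite Hx.
Qed.

Lemma chP e : e \in Efree -> exists x, ch e = Some x /\ free_vertex E e x.
Proof.
rewrite /Efree /E' /remove_free_edges !inE => /andP[Hn He].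
rewrite He /= negbK in Hn; rewrite /ch; case: pickP => [x Hx|H0].
  by exists x.
by case/existsP: Hn => x; rewrite H0.
Qed.

Lemma XP x : x \in X -> exists e, [/\ e \in Efree, ch e = Some x & free_vertex E e x].
Proof.
rewrite inE => /exists_inP [e He /eqP Hc]; exists e; split => //.
by have [y [Hy Hf]] := chP He; move: Hc; rewrite Hy => -[<-].
Qed.

Lemma Efree_E e : e \in Efree -> e \in E.
Proof. by rewrite inE => /andP[]. Qed.

Lemma XV : X \subset V.
Proof.
apply/subsetP=> x /XP [e [He _ /andP[Hx _]]].
exact: (subsetP (EV (Efree_E He))).
Qed.

Lemma Xuniq e x y : e \in E -> x \in X -> y \in X -> x \in e -> y \in e -> x = y.
Proof.
move=> He /XP [ex [_ Hcx Hfx]] /XP [ey [_ Hcy Hfy]] Hx Hy.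
have Ex := free_uniq Hfx He Hx; have Ey := free_uniq Hfy He Hy.
by move: Hcx Hcy; rewrite -Ex -Ey => -> [].
Qed.

Lemma cardX : #|X| = #|Efree|.
Proof.
have -> : #|Efree| = #|ch @: Efree|.
  rewrite card_in_imset // => e1 e2 H1 H2 Hc.
  have [x [Hx Hf]] := chP H1; have [y [Hy Hf2]] := chP H2.
  move: Hc; rewrite Hx Hy => -[Exy]; subst y.
  apply: (free_uniq Hf2 (Efree_E H1)); by case/andP: Hf.
rewrite -(card_imset _ (@Some_inj _)); suff -> : Some @: X = ch @: Efree by [].
apply/setP => o.
apply/imsetP/imsetP => [[x Hx ->]|[e He ->]].
  by have [e [He Hc _]] := XP Hx; exists e.
have [x [Hx _]] := chP He; exists x => //.
by rewrite inE; apply/exists_inP; exists e => //; rewrite Hx.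
Qed.

Lemma E'_noX e x : e \in E' -> x \in X -> x \in e -> False.
Proof.
rewrite /E' /remove_free_edges inE => /andP[He Hn] /XP [f [_ _ Hf]] Hx.
have Ef := free_uniq Hf He Hx; subst f.
by move/existsP: Hn; apply; exists x.
Qed.

Definition Gs := [set G : {set 'I_n} | (G \subset V :\: X) && [forall e in E, ~~ (e \subset G)]].
Definition XG (G : {set 'I_n}) :=
  [set x in X | [forall e in E, (x \in e) ==> ~~ (e :\ x \subset G)]].
Definition ZG (G : {set 'I_n}) := G :|: XG G :|: ~: V.

Lemma ZG_core (G : {set 'I_n}) y : y \in ZG G -> y \in V -> y \notin X -> y \in G.
Proof.
rewrite /ZG !inE => /orP[/orP[//|/andP[Hx _]]|Hv] Hy Hnx.
  by rewrite Hx in Hnx.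
by rewrite Hy in Hv.
Qed.

Lemma H2c (G F e : {set 'I_n}) : G \in Gs -> G \subset F -> F \subset ZG G -> e \in E -> ~~ (e \subset F).
Proof.
rewrite inE => /andP[HGV /forall_inP HGe] HGF HFZ He; apply/negP => HeF.
have core y : y \in e -> y \notin X -> y \in G.
  move=> Hy Hnx; apply: ZG_core Hnx.
    exact: (subsetP HFZ) (subsetP HeF _ Hy).
  exact: (subsetP (EV He)).
case: (boolP [exists x in e, x \in X]) => [/exists_inP [x Hxe HxX]|/exists_inPn Hno].
  have : x \in ZG G by exact: (subsetP HFZ) (subsetP HeF _ Hxe).
  rewrite /ZG !inE.
  have HxV : x \in V := subsetP XV _ HxX.
  rewrite HxV orbF => /orP[HxG|/andP[_ /forall_inP Hf]].
    by move: (subsetP HGV _ HxG); rewrite inE HxX.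
  move: (Hf e He); rewrite Hxe /= => /negP; apply; apply/subsetP => y.
  move=> Hyex; move: (Hyex); rewrite !inE => /andP[Hyx Hye]; apply: (core _ Hye).
  by apply/negP => HyX; move: Hyx; rewrite (Xuniq He HyX HxX Hye Hxe) eqxx.
move: (HGe e He) => /negP; apply; apply/subsetP => y Hy; exact: core (Hno y Hy).
Qed.

Lemma H3c (F : {set 'I_n}) : (forall e, e \in E -> ~~ (e \subset F)) ->
  (F :&: (V :\: X)) \in Gs /\ F \subset ZG (F :&: (V :\: X)).
Proof.
move=> HF; split.
  rewrite inE subsetIr /=; apply/forall_inP => e He; apply: contra (HF e He).
  by move/subset_trans; apply; apply: subsetIl.
apply/subsetP => i Hi; rewrite /ZG.
case HiV: (i \in V); last by apply/setUP; right; rewrite inE HiV.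
case HiX: (i \in X).
  apply/setUP; left; apply/setUP; right; apply/setIdP; split => //.
  apply/forall_inP => e He.
2: by apply/setUP; left; apply/setUP; left; apply/setIP; split => //; apply/setDP; split => //; rewrite HiX.
apply/implyP => Hie; apply: contra (HF e He) => Hsub.
apply/subsetP => y Hy; case: (eqVneq y i) => [->//|Hyi].
have : y \in e :\ i by rewrite in_setD1 Hyi Hy.
by move/(subsetP Hsub); rewrite inE => /andP[].
Qed.

Lemma H4c (G F : {set 'I_n}) : G \in Gs -> G \subset F -> F \subset ZG G -> G = F :&: (V :\: X).
Proof.
rewrite inE => /andP[HGV _] HGF HFZ; apply/setP => y; rewrite inE.
apply/idP/idP => [Hy|/andP[HyF]]; first by rewrite (subsetP HGF _ Hy) (subsetP HGV _ Hy).
rewrite inE => /andP[HnX HyV]; exact: ZG_core (subsetP HFZ _ HyF) HyV HnX.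
Qed.

Lemma match_exists : exists M, is_matching E' M && (#|M| == matching_number E').
Proof.
have Hpos : (0 < #|[pred M | is_matching E' M]|)%N.
  apply/card_gt0P; exists set0; rewrite inE /is_matching sub0set /=.
  by apply/forall_inP => e; rewrite inE.
have [M HM Eq] := eq_bigmax_cond (fun M : {set {set 'I_n}} => #|M|) Hpos.
by exists M; rewrite /matching_number Eq eqxx andbT; move: HM; rewrite inE.
Qed.

Lemma size_bound (G : {set 'I_n}) : G \in Gs ->
  (#|G| + matching_number E' + #|X| <= #|V|)%N.
Proof.
move=> HG; have [M /andP[/andP[HME /forall_inP HMd] /eqP <-]] := match_exists.
move: (HG); rewrite inE => /andP[HGV /forall_inP HGe].
pose f (m : {set 'I_n}) := [pick y in m :\: G].
have fP m : m \in M -> exists y, f m = Some y /\ y \in m /\ y \notin G.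
  move=> Hm; have HmE' := subsetP HME _ Hm.
  have HmE : m \in E by move: HmE'; rewrite inE => /andP[].
  rewrite /f; case: pickP => [y|H0]; first by rewrite inE => /andP[Hy1 Hy2]; exists y.
  move: (HGe m HmE) => /negP; case; apply/subsetP => y Hy.
  by move: (H0 y); rewrite inE Hy andbT => /negbFE.
have HM : #|M| = #|f @: M|.
  rewrite card_in_imset // => m1 m2 H1 H2 Hf.
  have [y [Hy [Hy1 _]]] := fP _ H1; have [z [Hz [Hz2 _]]] := fP _ H2.
  move: Hf; rewrite Hy Hz => -[Eyz]; subst z.
  apply/eqP; apply: contraT => Hne; move: (HMd m1 H1) => /forall_inP /(_ m2 H2).
  by rewrite Hne /= => /disjointFr /(_ Hy1); rewrite Hz2.
have Hsub : f @: M \subset Some @: ((V :\: X) :\: G).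
  apply/subsetP => o /imsetP [m Hm ->]; have [y [Hy [Hym HyG]]] := fP _ Hm.
  rewrite Hy; apply/imsetP; exists y => //.
  have HmE' := subsetP HME _ Hm.
  have HmE : m \in E by move: HmE'; rewrite inE => /andP[].
  apply/setDP; split => //; apply/setDP; split; first exact: (subsetP (EV HmE) _ Hym).
  by apply/negP => HyX; apply: (E'_noX HmE' HyX Hym).
have := subset_leq_card Hsub; rewrite card_imset; last exact: Some_inj.
rewrite -HM (cardsDS HGV) (cardsDS XV) => H.
have := subset_leq_card HGV; rewrite (cardsDS XV).
have := subset_leq_card XV.
move=> h1 h2; move: H h1 h2; set a := #|X|; set b := #|V|; set c := #|G|; set d := #|M|. lia.
Qed.

End Comb.

Theorem theorem4p1 (n : nat) (K : fieldType) (V : {set 'I_n}) (E : {set {set 'I_n}}) :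
  is_clutter V E ->
  sreg_le K E
    (#|V|%:Z - #|E|%:Z + #|remove_free_edges E|%:Z
       - (matching_number (remove_free_edges E))%:Z)%R.
Proof.
move=> [EV _].
exists #|Gs V E|, (fun j => enum_val j), (fun j => ZG V E (enum_val j)).
split.
  apply: stanley_of_partition.
  - by move=> j; rewrite /ZG -setUA subsetUl.
  - by move=> j F e HuF HFZ He; have := H2c EV (enum_valP j); apply.
  - move=> F HF; have [HG HFZ] := H3c V HF.
    exists (enum_rank_in HG (F :&: (V :\: X E))).
    by rewrite enum_rankK_in // subsetIl HFZ.
  - move=> j k F H1 H2 H3 H4; apply: enum_val_inj.
    by rewrite (H4c (enum_valP j) H1 H2) (H4c (enum_valP k) H3 H4).
move=> j; have := size_bound EV (enum_valP j); rewrite cardX.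
have HE' : remove_free_edges E \subset E.
  by apply/subsetP => e; rewrite inE => /andP[].
rewrite /Efree /E' (cardsDS HE').
have := subset_leq_card HE'.
rewrite /E'.
set a := #|E|; set b := #|remove_free_edges E|; set c := #|V|;
  set d := matching_number _; set g := #|enum_val j|.
lia.
Qed.
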